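(* Let $\kappa$ be a cardinal, $W_1,W_2\subseteq C^\omega$ objectives, and $(U_1,\le_1)$, $(U_2,\le_2)$ partially ordered $C$-graphs which are $(\kappa,W_1)$-universal and $(\kappa,W_2)$-universal respectively. Then their direct product $U$ is $(\kappa,W_1\cap W_2)$-universal.
   Context: A $C$-graph: vertex set $V(G)$, edges $E(G)\subseteq V(G)\times C\times V(G)$ written $v\xrightarrow{c}v'$, every vertex having an outgoing edge; a $C$-tree is a $C$-graph with root $t_0$ such that every vertex has a unique path from $t_0$. A morphism maps vertices so edges go to edges of the same colour. A vertex satisfies an objective $W$ if every infinite path from it has colour sequence in $W$. $G$ is $(\kappa,W)$-universal if every $C$-tree $T$ of cardinality $<\kappa$ with root $t_0$ admits a morphism $\phi:T\to G$ such that $\phi(t_0)$ satisfies $W$ in $G$ whenever $t_0$ satisfies $W$ in $T$. The direct product of $(U_1,\le_1)$ and $(U_2,\le_2)$ is the $C$-graph on $V(U_1)\times V(U_2)$ ordered coordinatewise, with an edge $(v_1,v_2)\xrightarrow{c}(v_1',v_2')$ iff $v_1\xrightarrow{c}v_1'\in E(U_1)$ and $v_2\xrightarrow{c}v_2'\in E(U_2)$. *)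

(* Defs.v *)
From Stdlib Require Import List.
Import ListNotations.
Set Implicit Arguments.

(* A C-graph: a vertex type and a C-coloured edge relation.
   Totality (every vertex has an outgoing edge) is a separate predicate (the direct product need not be total). *)
Record cgraph (C : Type) := CGraph {
  vert : Type;
  edge : vert -> C -> vert -> Prop }.
Arguments vert {C} _.
Arguments edge {C} _ _ _ _.

Definition total {C} (G : cgraph C) : Prop :=
  forall v : vert G, exists (c : C) (v' : vert G), edge G v c v'.

Fixpoint fpath {C} (G : cgraph C) (u : vert G) (l : list (C * vert G)) (v : vert G) : Prop :=
  match l with
  | [] => u = v
  | (c, w) :: l' => edge G u c w /\ fpath G w l' v
  end.

Record ctree (C : Type) := CTree {
  tgraph : cgraph C;
  troot : vert tgraph;
  ttotal : total tgraph;
  tunique : forall v : vert tgraph, exists! l, fpath tgraph troot l v }.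
Arguments tgraph {C} _.
Arguments troot {C} _.

Definition objective (C : Type) := (nat -> C) -> Prop.

Definition ipath {C} (G : cgraph C) (v : vert G) (p : nat -> vert G) (w : nat -> C) : Prop :=
  p 0 = v /\ forall n, edge G (p n) (w n) (p (S n)).

Definition satisfies {C} (G : cgraph C) (W : objective C) (v : vert G) : Prop :=
  forall p w, ipath G v p w -> W w.

Definition is_morphism {C} (G H : cgraph C) (phi : vert G -> vert H) : Prop :=
  forall t c t', edge G t c t' -> edge H (phi t) c (phi t').

Definition card_lt (A K : Type) : Prop :=
  (exists f : A -> K, forall x y, f x = f y -> x = y) /\
  ~ (exists g : K -> A, forall x y, g x = g y -> x = y).

(* (kappa, W)-universality, the cardinal kappa given as (the cardinality of) a type K *)
Definition universal {C} (K : Type) (W : objective C) (G : cgraph C) : Prop :=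
  forall T : ctree C, card_lt (vert (tgraph T)) K ->
    exists phi : vert (tgraph T) -> vert G,
      is_morphism (tgraph T) G phi /\
      (satisfies (tgraph T) W (troot T) -> satisfies G W (phi (troot T))).

Definition objI {C} (W1 W2 : objective C) : objective C := fun w => W1 w /\ W2 w.

Definition is_porder {A} (le : A -> A -> Prop) : Prop :=
  (forall x, le x x) /\ (forall x y, le x y -> le y x -> x = y) /\
  (forall x y z, le x y -> le y z -> le x z).

Definition prod_graph {C} (G1 G2 : cgraph C) : cgraph C :=
  @CGraph C (vert G1 * vert G2)
    (fun v c v' => edge G1 (fst v) c (fst v') /\ edge G2 (snd v) c (snd v')).

Definition prod_le {A B} (le1 : A -> A -> Prop) (le2 : B -> B -> Prop) (x y : A * B) : Prop :=
  le1 (fst x) (fst y) /\ le2 (snd x) (snd y).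

(* Main.v *)
Require Import Defs.

Theorem lemma6p6 (C : Type) (K : Type) (W1 W2 : objective C)
  (U1 U2 : cgraph C)
  (le1 : vert U1 -> vert U1 -> Prop) (le2 : vert U2 -> vert U2 -> Prop)
  (tot1 : total U1) (tot2 : total U2)
  (po1 : is_porder le1) (po2 : is_porder le2)
  (H1 : universal K W1 U1) (H2 : universal K W2 U2) :
  universal K (objI W1 W2) (prod_graph U1 U2).
Proof.
  intros T HT.
  destruct (H1 T HT) as [f1 [m1 s1]].
  destruct (H2 T HT) as [f2 [m2 s2]].
  exists (fun t => (f1 t, f2 t)).
  split.
  - intros t c t' e. simpl. split; auto.
  - intros S p w [p0 Hp].
    assert (A1 : satisfies (tgraph T) W1 (troot T)).
    { intros q u Hq. apply (S q u Hq). }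
    assert (A2 : satisfies (tgraph T) W2 (troot T)).
    { intros q u Hq. apply (S q u Hq). }
    split.
    + apply (s1 A1 (fun n => fst (p n)) w). split.
      * rewrite p0. reflexivity.
      * intro n. apply (Hp n).
    + apply (s2 A2 (fun n => snd (p n)) w). split.
      * rewrite p0. reflexivity.
      * intro n. apply (Hp n).
Qed.
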